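(* Let $G$ be a graph, $X\subseteq V(G)$ with $F:=G-X$ a pseudoforest, and $k$ an integer. Suppose there are distinct $u,v,w\in X$ such that $\{u,v,w\}$ is independent in $G$, $\mathrm{Conf}_F(\{u,v,w\}) \ge |X|$, and there is no anchor triangle $P$ with $N_G(V(P))=\{u,v,w\}$. Let $G'$ be obtained from $G$ by adding three new vertices $p_u,p_v,p_w$ and the edges $p_up_v, p_up_w, p_vp_w, p_uu, p_vv, p_ww$, and let $k' := k+1$. Then $G$ has an independent set of size at least $k$ if and only if $G'$ has an independent set of size at least $k'$.
   Context: All graphs are finite, simple and undirected; a pseudoforest is a graph each of whose connected components contains at most one cycle. $\alpha(H)$ is the independence number of $H$. For a subgraph $F'\subseteq F$ and $X'\subseteq X$, the number of conflicts is $\mathrm{Conf}_{F'}(X') := \alpha(F') - \alpha(F' - N_G(X'))$, where $N_G(X')$ is the set of vertices outside $X'$ adjacent to some vertex of $X'$. An anchor triangle is a connected component $P$ of $F=G-X$ with $V(P)=\{p_1,p_2,p_3\}$ such that there are vertices $x_1,x_2,x_3\in X$ with $N_G(p_1)=\{p_2,p_3,x_1\}$, $N_G(p_2)=\{p_1,p_3,x_2\}$, $N_G(p_3)=\{p_1,p_2,x_3\}$. *)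

(* Defs.v *)
(* Graphs: a simple graph on a finType T is a symmetric,
   irreflexive relation e : rel T (assumed as hypotheses in the theorem). *)
From mathcomp Require Import all_boot all_order all_algebra.
Set Implicit Arguments. Unset Strict Implicit. Unset Printing Implicit Defensive.

Section Defs.
Variable T : finType.
Variable e : rel T.

Definition indep (S : {set T}) : bool :=
  [forall x in S, forall y in S, ~~ e x y].

Definition alpha (A : {set T}) : nat :=
  \big[maxn/0%N]_(S : {set T} | (S \subset A) && indep S) #|S|.

Definition NG (Y : {set T}) : {set T} :=
  [set y | (y \notin Y) && [exists x in Y, e x y]].

Definition induced (A : {set T}) : rel T :=
  fun x y => [&& x \in A, y \in A & e x y].

Definition cycle_in (A : {set T}) (c : seq T) : bool :=
  [&& uniq c, 2 < size c, all (fun x => x \in A) c & cycle e c].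

Definition cyc_edge (c : seq T) (x y : T) : bool :=
  ((x \in c) && (next c x == y)) || ((y \in c) && (next c y == x)).

(* G[A] is a pseudoforest: any two cycles lying in the same connected
   component of G[A] are the same cycle (same edge set), i.e. each
   component contains at most one cycle. *)
Definition pseudoforest (A : {set T}) : Prop :=
  forall c1 c2 : seq T, cycle_in A c1 -> cycle_in A c2 ->
    (exists x y, [/\ x \in c1, y \in c2 & connect (induced A) x y]) ->
    forall x y, cyc_edge c1 x y = cyc_edge c2 x y.

Definition Conf (X Y : {set T}) : nat :=
  alpha (~: X) - alpha (~: X :\: NG Y).

Definition anchor_triangle (X P : {set T}) : Prop :=
  exists p1 p2 p3 x1 x2 x3 : T,
    [/\ P = [set p1; p2; p3], [&& p1 != p2, p1 != p3 & p2 != p3],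
        p1 \notin X /\ P = [set y | connect (induced (~: X)) p1 y],
        [&& x1 \in X, x2 \in X & x3 \in X] &
        [/\ [set y | e p1 y] = [set p2; p3; x1],
            [set y | e p2 y] = [set p1; p3; x2] &
            [set y | e p3 y] = [set p1; p2; x3]]].

End Defs.

(* The graph G' obtained from G by adding p_u, p_v, p_w (= inr 0, inr 1, inr 2),
   the triangle on them, and edges p_u u, p_v v, p_w w. *)
Definition attach (T : finType) (u v w : T) (i : 'I_3) : T :=
  nth u [:: u; v; w] i.

Definition ext_rel (T : finType) (e : rel T) (u v w : T) : rel (T + 'I_3) :=
  fun a b =>
    match a, b with
    | inl x, inl y => e x y
    | inr i, inr j => i != j
    | inl x, inr i => x == attach u v w i
    | inr i, inl x => x == attach u v w i
    end.

(* Main.v *)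
Require Import Defs.
From mathcomp Require Import all_boot all_order all_algebra zify.
Import GRing.Theory Num.Theory.
Set Implicit Arguments. Unset Strict Implicit.

Section H.
Variables (T : finType) (e : rel T).

Lemma alpha_ge (A S : {set T}) : S \subset A -> indep e S -> (#|S| <= alpha e A)%N.
Proof. by move=> h1 h2; rewrite /alpha; apply: (@leq_bigmax_cond _ (fun S : {set T} => (S \subset A) && indep e S) (fun S : {set T} => #|S|)); rewrite h1 h2. Qed.

Lemma alpha_att (A : {set T}) : exists2 S : {set T}, (S \subset A) && indep e S & #|S| = alpha e A.
Proof.
have h : (0 < #|[pred S : {set T} | (S \subset A) && indep e S]|)%N.
  apply/card_gt0P; exists set0; rewrite inE sub0set /indep.
  by apply/forall_inP => x; rewrite inE.
have [S0 HS0 HE] := eq_bigmax_cond (fun S : {set T} => #|S|) h.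
exists S0; first by move: HS0; rewrite inE.
by rewrite /alpha -HE.
Qed.

Variables (u v w : T).

Lemma ext_add (S : {set T}) (i : 'I_3) : indep e S -> attach u v w i \notin S ->
  indep (ext_rel e u v w) (inl @: S :|: [set inr i]) /\
  #|inl @: S :|: [set inr i]| = (#|S| + 1)%N.
Proof.
move=> hS hi; split.
  have mem : forall z, (z \in inl @: S :|: [set inr i]) =
     (match z with inl a => a \in S | inr j => j == i end).
    case=> [a|j]; rewrite !inE.
      by rewrite mem_imset ?orbF //; move=> ? ? [].
    have -> : (inr j \in inl @: S) = false.
      by apply/negbTE/negP => /imsetP [? _].
    by [].
  apply/forall_inP => x Hx; apply/forall_inP => y Hy.
  move: Hx Hy; rewrite !mem; case: x => [a|j]; case: y => [b|l] /=.
  - by move=> Ha Hb; move/forall_inP: hS => /(_ a Ha) /forall_inP /(_ b Hb).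
  - by move=> Ha /eqP ->; apply/negP => /eqP Ea; move: hi; rewrite -Ea Ha.
  - by move=> /eqP -> Hb; apply/negP => /eqP Ea; move: hi; rewrite -Ea Hb.
  - by move=> /eqP -> /eqP ->; rewrite eqxx.
rewrite cardsU cards1 card_imset; last by move=> ? ? [].
suff -> : inl @: S :&: [set inr i] = set0 by rewrite cards0 subn0.
apply/setP => x; rewrite !inE; apply/negP => /andP [H1 /eqP H2].
by move: H1; rewrite H2; move/imsetP => [? _].
Qed.

Lemma ext_back (S : {set (T + 'I_3)}) : indep (ext_rel e u v w) S ->
  indep e [set x | inl x \in S] /\ (#|S| <= #|[set x | inl x \in S]| + 1)%N.
Proof.
move=> hS; split.
  apply/forall_inP => x; rewrite inE => hx; apply/forall_inP => y; rewrite inE => hy.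
  by move/forall_inP: hS => /(_ _ hx) /forall_inP /(_ _ hy).
set B := [set x | inl x \in S].
set C := [set x in S | if x is inr _ then true else false].
have sub : S \subset inl @: B :|: C.
  apply/subsetP => x Hx; rewrite !inE; case: x Hx => [a|j] Hx.
    by rewrite (mem_imset _ _ _) ?inE ?Hx //; move=> ? ? [].
  by rewrite Hx orbT.
have hC : (#|C| <= 1)%N.
  rewrite leqNgt; apply/negP => /card_gt1P [x [y [Hx Hy Hxy]]].
  move: Hx Hy Hxy; rewrite !inE; case: x => [a|j]; rewrite ?andbF //; case: y => [b|l]; rewrite ?andbF //.
  rewrite !andbT => Hj Hl Hjl.
  move/forall_inP: hS => /(_ _ Hj) /forall_inP /(_ _ Hl) /=.
  by move/negPn/eqP => E; move: Hjl; rewrite E eqxx.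
apply: (leq_trans (subset_leq_card sub)).
rewrite (leq_trans (leq_card_setU _ _)) // card_imset; last by move=> ? ? [].
by rewrite leq_add2l.
Qed.
Lemma indep_sub (A B : {set T}) : A \subset B -> indep e B -> indep e A.
Proof.
move=> /subsetP h /forall_inP hB; apply/forall_inP => x Hx; apply/forall_inP => y Hy.
by move: (hB x (h x Hx)) => /forall_inP /(_ y (h y Hy)).
Qed.
End H.

Theorem lemma3 (T : finType) (e : rel T) (X : {set T}) (k : int) (u v w : T) :
  symmetric e -> irreflexive e ->
  pseudoforest e (~: X) ->
  [&& u \in X, v \in X & w \in X] ->
  [&& u != v, u != w & v != w] ->
  indep e [set u; v; w] ->
  (#|X| <= Conf e X [set u; v; w])%N ->
  ~ (exists P : {set T}, anchor_triangle e X P /\ NG e P = [set u; v; w]) ->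
  ((exists S : {set T}, indep e S /\ (k <= (#|S|)%:Z)%R) <->
   (exists S : {set (T + 'I_3)%type}, indep (ext_rel e u v w) S /\
      (k + 1 <= (#|S|)%:Z)%R)).
Proof.
move=> _ _ _ /and3P [uX vX wX] _ _ hConf _; split; last first.
  move=> [S' [hS' hk]]; have [hB hc] := ext_back hS'.
  exists [set x | inl x \in S']; split => //; lia.
move=> [S [hS hk]].
have fin : forall S0 : {set T}, forall i : 'I_3, indep e S0 -> attach u v w i \notin S0 ->
   (#|S| <= #|S0|)%N -> exists S : {set (T + 'I_3)%type}, indep (ext_rel e u v w) S /\
      (k + 1 <= (#|S|)%:Z)%R.
  move=> S0 i h1 h2 h3; have [h4 h5] := ext_add h1 h2.
  exists (inl @: S0 :|: [set inr i]); split => //; rewrite h5; lia.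
case Hu: (u \in S); last by apply: (fin S (@Ordinal 3 0 erefl)) => //; rewrite Hu.
case Hv: (v \in S); last by apply: (fin S (@Ordinal 3 1 erefl)) => //; rewrite Hv.
case Hw: (w \in S); last by apply: (fin S (@Ordinal 3 2 erefl)) => //; rewrite Hw.
have [S0 /andP [sub0 ind0] c0] := alpha_att e (~: X).
apply: (fin S0 (@Ordinal 3 0 erefl)) => //.
  by apply/negP => /(subsetP sub0); rewrite inE uX.
rewrite c0 -(cardsID X S).
have h1 : (#|S :&: X| <= #|X|)%N by apply: subset_leq_card; apply: subsetIr.
have h2 : (#|S :\: X| <= alpha e (~: X :\: NG e [set u; v; w]))%N.
  apply: alpha_ge; last by apply: (indep_sub _ hS); apply: subsetDl.
  apply/subsetP => y; rewrite !inE => /andP [yX yS]; rewrite yX andbT.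
  apply/negP => /andP [_ /existsP [x /andP [Hx Exy]]].
  have xS : x \in S by move: Hx; rewrite !inE => /orP [/orP [] | ] /eqP ->.
  by move/forall_inP: hS => /(_ x xS) /forall_inP /(_ y yS); rewrite Exy.
have h3 : (alpha e (~: X :\: NG e [set u; v; w]) <= alpha e (~: X))%N.
  have [S1 /andP [s1 i1] <-] := alpha_att e (~: X :\: NG e [set u; v; w]).
  by apply: alpha_ge => //; apply: (subset_trans s1); apply: subsetDl.
have h0 : (0 < #|X|)%N by apply/card_gt0P; exists u.
move: hConf; rewrite /Conf; lia.
Qed.
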